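(* Let $f\colon\mathbb{R}^n\to\mathbb{R}$ be convex and differentiable with $\|\nabla f(x)-\nabla f(y)\|\le L\|x-y\|$ (Euclidean norm, $L>0$), with a minimizer $x_\star$, $f_\star=f(x_\star)$. Let $\theta_{-1}=0$, $\theta_0=1$, $\theta_{k+1}>0$ with $\theta_{k+1}^2-\theta_{k+1}=\theta_k^2$ for $k\ge0$, and $\varphi_k>0$ with $\varphi_k^2-\varphi_k=2\theta_{k-1}^2$ for $k\ge0$. Given $x_0$, let $y_0=\tilde x_0=x_0$ and for $k\ge0$: \[ y_{k+1}=x_k-\tfrac1L\nabla f(x_k),\quad x_{k+1}=y_{k+1}+\tfrac{\theta_k-1}{\theta_{k+1}}(y_{k+1}-y_k)+\tfrac{\theta_k}{\theta_{k+1}}(y_{k+1}-x_k),\quad \tilde x_{k+1}=y_{k+1}+\tfrac{\theta_k-1}{\varphi_{k+1}}(y_{k+1}-y_k)+\tfrac{\theta_k}{\varphi_{k+1}}(y_{k+1}-x_k). \] Then for $k=0,1,\dots$, \[ f(\tilde x_k)-f_\star\le\frac{L\|x_0-x_\star\|^2}{2\varphi_k^2}=\frac{L\|x_0-x_\star\|^2}{(k+\zeta+1/\sqrt2)^2}-\frac{L\|x_0-x_\star\|^2\log k}{(k+\zeta+1/\sqrt2)^3}+o\!\left(\frac1{k^3}\right), \] where $\zeta$ is the constant defined in the context (the asymptotic expansion refers to $k\to\infty$).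
   Context: For this sequence $\{\theta_k\}$ the limit $\zeta:=\lim_{k\to\infty}\big(2\theta_k-k-1-\tfrac12\log k\big)$ exists, with $\zeta\approx0.646$. $\log$ is the natural logarithm. *)

(* Defs.v *)
From HB Require Import structures.
From mathcomp Require Import all_boot all_order all_algebra.
From mathcomp Require Import all_classical all_reals all_analysis.
Set Implicit Arguments. Unset Strict Implicit. Unset Printing Implicit Defensive.
Import Order.TTheory GRing.Theory Num.Theory.
Import numFieldNormedType.Exports.
Local Open Scope ring_scope.

(* Euclidean inner product and norm on R^n (the library's norm on 'rV is the max norm). *)
Definition dotv {R : realType} {n : nat} (u v : 'rV[R]_n) : R :=
  \sum_(i < n) u ord0 i * v ord0 i.
Definition enorm {R : realType} {n : nat} (v : 'rV[R]_n) : R :=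
  Num.sqrt (dotv v v).

Definition convex_fun {R : realType} {n : nat} (f : 'rV[R]_n -> R) : Prop :=
  forall (x y : 'rV[R]_n) (t : R), 0 <= t -> t <= 1 ->
    f (t *: x + (1 - t) *: y) <= t * f x + (1 - t) * f y.

Definition gradient {R : realType} {n : nat} (f : 'rV[R]_n -> R) (x : 'rV[R]_n)
  : 'rV[R]_n :=
  \row_(i < n) ('D_(delta_mx ord0 i) f x : R).

(* Main.v *)
Require Import Defs.
From HB Require Import structures.
From mathcomp Require Import all_boot all_order all_algebra.
From mathcomp Require Import all_classical all_reals all_analysis.
From mathcomp Require Import ring lra.
Import Order.TTheory GRing.Theory Num.Theory.
Import numFieldNormedType.Exports.
Local Open Scope classical_set_scope.
Local Open Scope ring_scope.


Section Dot.
Context {R : realType} {n : nat}.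
Implicit Types u v w : 'rV[R]_n.

Lemma dotvC u v : dotv u v = dotv v u.
Proof. by apply: eq_bigr => i _; rewrite mulrC. Qed.
Lemma dotvDl u v w : dotv (u + v) w = dotv u w + dotv v w.
Proof. by rewrite /dotv -big_split; apply: eq_bigr => i _; rewrite mxE mulrDl. Qed.
Lemma dotvDr u v w : dotv w (u + v) = dotv w u + dotv w v.
Proof. by rewrite dotvC dotvDl !(dotvC w). Qed.
Lemma dotvZl (a : R) u v : dotv (a *: u) v = a * dotv u v.
Proof. by rewrite /dotv mulr_sumr; apply: eq_bigr => i _; rewrite mxE mulrA. Qed.
Lemma dotvZr (a : R) u v : dotv u (a *: v) = a * dotv u v.
Proof. by rewrite dotvC dotvZl dotvC. Qed.
Lemma dotvNl u v : dotv (- u) v = - dotv u v.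
Proof. by rewrite -scaleN1r dotvZl mulN1r. Qed.
Lemma dotvNr u v : dotv u (- v) = - dotv u v.
Proof. by rewrite dotvC dotvNl dotvC. Qed.
Lemma dotvBl u v w : dotv (u - v) w = dotv u w - dotv v w.
Proof. by rewrite dotvDl dotvNl. Qed.
Lemma dotvBr u v w : dotv w (u - v) = dotv w u - dotv w v.
Proof. by rewrite dotvDr dotvNr. Qed.
Lemma dotv_ge0 u : 0 <= dotv u u.
Proof. by apply: sumr_ge0 => i _; rewrite -expr2 sqr_ge0. Qed.
Lemma enorm_sq u : enorm u ^+ 2 = dotv u u.
Proof. by rewrite /enorm sqr_sqrtr // dotv_ge0. Qed.

Lemma dotv_le u v (K : R) : 0 < K -> enorm u <= K * enorm v ->
  dotv u v <= K * dotv v v.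
Proof.
move=> K0 H.
have H2 : dotv u u <= K ^+ 2 * dotv v v.
  rewrite -!enorm_sq.
  have a0 : 0 <= enorm u by exact: sqrtr_ge0.
  have b0 : 0 <= enorm v by exact: sqrtr_ge0.
  nra.
have H3 := dotv_ge0 (u - K *: v).
rewrite !(dotvBl, dotvBr, dotvZl, dotvZr) (dotvC v u) in H3.
have : K * dotv u v <= K * (K * dotv v v) by nra.
by rewrite ler_pM2l.
Qed.
End Dot.

Section Grad.
Context {R : realType} {n : nat} (f : 'rV[R]_n -> R).

Lemma gradE x v : differentiable f x -> 'D_v f x = dotv v (gradient f x).
Proof.
move=> df; rewrite deriveE // {1}(row_sum_delta v) linear_sum /dotv.
apply: eq_bigr => i _; rewrite linearZ /= mxE -deriveE //.
Qed.

Lemma line_derive (x v : 'rV[R]_n) (t : R) : (forall z, differentiable f z) ->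
  is_derive t 1 (fun s : R => f (x + s *: v)) (dotv v (gradient f (x + t *: v))).
Proof.
move=> df.
have E : (fun h : R => h^-1 *: (((fun s : R => f (x + s *: v)) \o shift t) (h *: 1)
            - f (x + t *: v)))
       = (fun h : R => h^-1 *: ((f \o shift (x + t *: v)) (h *: v) - f (x + t *: v))).
  apply: funext => h /=; congr (_ *: (f _ - _)).
  by rewrite [h%:A]mulr1 scalerDl addrCA.
apply: DeriveDef.
  by rewrite /derivable E; exact: diff_derivable.
by rewrite /derive E -gradE.
Qed.
End Grad.

Lemma dotv_le2 {R : realType} {n : nat} (u v : 'rV[R]_n) (K : R) : 0 < K ->
  dotv u u <= K ^+ 2 * dotv v v -> dotv u v <= K * dotv v v.
Proof.
move=> K0 H2.
have H3 := dotv_ge0 (u - K *: v).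
rewrite !(dotvBl, dotvBr, dotvZl, dotvZr) (dotvC v u) in H3.
have : K * dotv u v <= K * (K * dotv v v) by nra.
by rewrite ler_pM2l.
Qed.

Lemma small_le {R : realType} (D C : R) : 0 <= C ->
  (forall t, 0 < t -> t < 1 -> D <= C * t) -> D <= 0.
Proof.
move=> C0 H; rewrite leNgt; apply/negP => D0.
have p : 0 < D + C + 1 by lra.
have t0 : 0 < D / (D + C + 1) by rewrite divr_gt0.
have t1 : D / (D + C + 1) < 1 by rewrite ltr_pdivrMr // mul1r; lra.
have := H _ t0 t1.
rewrite mulrA ler_pdivlMr // => h; nra.
Qed.

Lemma quad_derive {R : realType} (g : R -> R) (a b t dg : R) :
  is_derive t 1 g dg ->
  is_derive t 1 (fun s => g s - a * s - b * (s * s)) (dg - a - b * (t + t)).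
Proof.
move=> H.
apply: is_derive_eq.
by rewrite ![_%:A]mulr1.
Qed.

Section Smooth.
Variables (R : realType) (n : nat) (f : 'rV[R]_n -> R) (L : R).
Hypotheses (df : forall z, differentiable f z) (L0 : 0 < L)
  (Lip : forall u v, enorm (gradient f u - gradient f v) <= L * enorm (u - v))
  (cvx : convex_fun f).

Local Notation g := (gradient f).

Lemma lip_sq u v : dotv (g u - g v) (g u - g v) <= L ^+ 2 * dotv (u - v) (u - v).
Proof.
rewrite -!enorm_sq.
have a0 : 0 <= enorm (g u - g v) by exact: sqrtr_ge0.
have b0 : 0 <= enorm (u - v) by exact: sqrtr_ge0.
have := Lip u v; nra.
Qed.

Lemma mvt_line (x v : 'rV[R]_n) (a b c0 c1 : R) : a < b ->
  exists2 c, c \in `]a, b[%R &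
   (f (x + b *: v) - c0 * b - c1 * (b * b)) - (f (x + a *: v) - c0 * a - c1 * (a * a))
   = (dotv v (g (x + c *: v)) - c0 - c1 * (c + c)) * (b - a).
Proof.
move=> ab.
have D (s : R) : is_derive s 1 (fun s => f (x + s *: v) - c0 * s - c1 * (s * s))
   (dotv v (g (x + s *: v)) - c0 - c1 * (s + s)).
  exact/quad_derive/line_derive.
apply: (MVT ab).
apply: derivable_within_continuous => s _.
by have [] := D s.
Qed.

Lemma grad_diff_le (x v : 'rV[R]_n) (c : R) : 0 < c ->
  dotv (g (x + c *: v) - g x) v <= (L * c) * dotv v v.
Proof.
move=> c0; apply: dotv_le2; first by rewrite mulr_gt0.
apply: (le_trans (lip_sq _ _)).
rewrite [x + _]addrC addrK !(dotvZl, dotvZr) exprMn; lra.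
Qed.

Lemma grad_diff_le' (x v : 'rV[R]_n) (c : R) : 0 < c ->
  dotv (g x - g (x + c *: v)) v <= (L * c) * dotv v v.
Proof.
move=> c0; apply: dotv_le2; first by rewrite mulr_gt0.
apply: (le_trans (lip_sq _ _)).
rewrite opprD addrA subrr add0r !(dotvNl, dotvNr, dotvZl, dotvZr) exprMn; lra.
Qed.

Lemma descent (x v : 'rV[R]_n) :
  f (x + v) <= f x + dotv v (g x) + L / 2 * dotv v v.
Proof.
have [c] := mvt_line x v 0 1 (dotv v (g x)) (L / 2 * dotv v v) (@ltr01 R).
rewrite in_itv /= => /andP[c0 c1] E.
rewrite /= !scale1r !scale0r addr0 !mulr0 !mulr1 !subr0 in E.
have := grad_diff_le x v c c0.
rewrite dotvBl (dotvC _ v) (dotvC (g x) v) => H.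
have dv := dotv_ge0 v.
nra.
Qed.

Lemma conv_first (x y : 'rV[R]_n) :
  f x + dotv (y - x) (g x) <= f y.
Proof.
set v := y - x.
rewrite -subr_ge0 -oppr_le0.
have dv := dotv_ge0 v.
apply: (@small_le _ _ (L / 2 * dotv v v)); first by rewrite mulr_ge0 // divr_ge0 // ltW.
move=> t t0 t1.
have [c] := mvt_line x v 0 t (dotv v (g x)) (- (L / 2 * dotv v v)) t0.
rewrite in_itv /= => /andP[c0 ct] E.
rewrite /= !scale0r addr0 !mulr0 !subr0 in E.
have := grad_diff_le' x v c c0.
rewrite dotvBl (dotvC (g x) v) (dotvC _ v) => H.
have C := cvx y x t (ltW t0) (ltW t1).
have eq : t *: y + (1 - t) *: x = x + t *: v.
  by rewrite /v scalerBl scale1r scalerBr addrCA addrA.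
rewrite eq in C.
have Ht : t * (dotv v (g x) - dotv v (g (x + c *: v))) <= t * (L * c * dotv v v).
  by rewrite ler_pM2l.
nra.
Qed.

Lemma interp (a b : 'rV[R]_n) :
  f b + dotv (a - b) (g b) + (2 * L)^-1 * dotv (g a - g b) (g a - g b) <= f a.
Proof.
set d := g a - g b.
have Hd : dotv d (g a) - dotv d (g b) = dotv d d by rewrite dotvBr.
clearbody d.
have H1 := descent a (- (L^-1 *: d)).
have H2 := conv_first b (a + - (L^-1 *: d)).
rewrite !(dotvDl, dotvDr, dotvBl, dotvBr, dotvNl, dotvNr, dotvZl, dotvZr) in H1 H2 *.
have iL : L * L^-1 = 1 by rewrite divff // gt_eqF.
rewrite invfM.
set iL' := L^-1 in iL H1 H2 *.
have E : L / 2 * - - (iL' * (iL' * dotv d d)) = 2^-1 * iL' * dotv d d.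
  rewrite opprK; transitivity ((L * iL') * (2^-1 * iL' * dotv d d)); first ring.
  by rewrite iL mul1r.
have Hd' : iL' * dotv d (g a) - iL' * dotv d (g b) = iL' * dotv d d.
  by rewrite -mulrBr Hd.
rewrite E in H1.
lra.
Qed.
End Smooth.

Lemma dotv_eq0 {R : realType} {n : nat} (u : 'rV[R]_n) : dotv u u <= 0 -> u = 0.
Proof.
move=> H.
have H0 : dotv u u = 0 by apply/eqP; rewrite eq_le H dotv_ge0.
move: H0; rewrite /dotv => /eqP; rewrite psumr_eq0 => [/allP H1|i _]; last first.
  by rewrite -expr2 sqr_ge0.
apply/rowP => j; rewrite mxE.
have := H1 j (mem_index_enum j); rewrite /= mulf_eq0 orbb => /eqP.
done.
Qed.

Lemma grad_min {R : realType} {n : nat} (f : 'rV[R]_n -> R) (L : R) (xs : 'rV[R]_n) :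
  (forall z, differentiable f z) -> 0 < L ->
  (forall u v, enorm (gradient f u - gradient f v) <= L * enorm (u - v)) ->
  (forall z, f xs <= f z) -> gradient f xs = 0.
Proof.
move=> df L0 Lip hmin; apply: dotv_eq0.
have H := @descent R n f L df L0 Lip xs (- (L^-1 *: gradient f xs)).
have := hmin (xs + - (L^-1 *: gradient f xs)).
rewrite !(dotvNl, dotvNr, dotvZl, dotvZr) in H.
set G := dotv _ _ in H *.
have iL : L * L^-1 = 1 by rewrite divff // gt_eqF.
have E : L / 2 * - - (L^-1 * (L^-1 * G)) = 2^-1 * L^-1 * G.
  rewrite opprK; transitivity ((L * L^-1) * (2^-1 * L^-1 * G)); first ring.
  by rewrite iL mul1r.
rewrite E in H => H2.
have : 0 <= - (2^-1 * L^-1 * G) by lra.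
rewrite oppr_ge0 -mulrA pmulr_rle0 // pmulr_rle0 //.
by rewrite invr_gt0.
Qed.

Section Ident.
Context {R : realType} {n : nat}.

Lemma S_zero (s L : R) (x0 w xs g0 g1 y1 x1 z2 : 'rV[R]_n) :
  s != 0 -> L != 0 ->
  y1 = x0 - L^-1 *: g0 ->
  x1 = s^-1 *: ((s - 1) *: y1 + w) ->
  z2 = w - (2 * s / L) *: g1 ->
  2 * s * (- dotv (xs - x1) g1 - (2 * L)^-1 * dotv g1 g1)
  + 2 * (s ^+ 2 - s) * (- dotv (x0 - x1) g1 - (2 * L)^-1 * dotv (g0 - g1) (g0 - g1))
  - s ^+ 2 / L * dotv g1 g1 + (s ^+ 2 - s) / L * dotv g0 g0
  + L / 2 * dotv (z2 - xs) (z2 - xs) - L / 2 * dotv (w - xs) (w - xs) = 0.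
Proof.
move=> s0 L0 -> -> ->.
rewrite /dotv.
do 6 (rewrite ?mulr_sumr -?sumrN -?big_split /=).
apply: big1 => i _; rewrite !mxE.
by field; apply/andP.
Qed.

Lemma T_final (p L : R) (x0 w xs g0 h y1 xt : 'rV[R]_n) :
  p != 0 -> L != 0 ->
  y1 = x0 - L^-1 *: g0 ->
  xt = p^-1 *: ((p - 1) *: y1 + w) ->
  p * (- dotv (xs - xt) h - (2 * L)^-1 * dotv h h)
  + (p ^+ 2 - p) * (- dotv (x0 - xt) h - (2 * L)^-1 * dotv (g0 - h) (g0 - h))
  + (p ^+ 2 - p) / 2 / L * dotv g0 g0 - L / 2 * dotv (w - xs) (w - xs)
  = - (2 * L)^-1 * dotv (p *: h - L *: (w - xs)) (p *: h - L *: (w - xs)).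
Proof.
move=> s0 L0 -> ->.
rewrite /dotv.
do 6 (rewrite ?mulr_sumr -?sumrN -?big_split /=).
apply: eq_bigr => i _; rewrite !mxE.
by field; apply/andP.
Qed.

Lemma T_base0 (L : R) (x0 xs g0 z1 : 'rV[R]_n) : L != 0 ->
  z1 = x0 - (2 / L) *: g0 ->
  2 * (- ((2 * L)^-1 * dotv g0 g0)) + L / 2 * dotv (z1 - xs) (z1 - xs)
  = L / 2 * dotv (x0 - xs) (x0 - xs) + 2 * (dotv (xs - x0) g0 + (2 * L)^-1 * dotv g0 g0).
Proof.
move=> L0 ->.
rewrite /dotv.
do 6 (rewrite ?mulr_sumr -?sumrN -?big_split /=).
apply: eq_bigr => i _; rewrite !mxE.
by field.
Qed.

Lemma T_base1 (L : R) (x0 xs g0 : 'rV[R]_n) : L != 0 ->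
  dotv (x0 - xs) g0 - (2 * L)^-1 * dotv g0 g0
  = L / 2 * dotv (x0 - xs) (x0 - xs)
    - (2 * L)^-1 * dotv (g0 - L *: (x0 - xs)) (g0 - L *: (x0 - xs)).
Proof.
move=> L0.
rewrite /dotv.
do 6 (rewrite ?mulr_sumr -?sumrN -?big_split /=).
apply: eq_bigr => i _; rewrite !mxE.
by field.
Qed.
End Ident.

Section Part1.
Variables (R : realType) (n : nat) (f : 'rV[R]_n -> R) (L : R)
  (xs : 'rV[R]_n) (theta phi : nat -> R) (x y xt : nat -> 'rV[R]_n).
Hypotheses (df : forall z, differentiable f z) (L0 : 0 < L)
  (Lip : forall u v, enorm (gradient f u - gradient f v) <= L * enorm (u - v))
  (cvx : convex_fun f)
  (hmin : forall z : 'rV[R]_n, f xs <= f z)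
  (th0 : theta 0%N = 1)
  (thS : forall k : nat, 0 < theta k.+1 /\ theta k.+1 ^+ 2 - theta k.+1 = theta k ^+ 2)
  (php : forall k : nat, 0 < phi k)
  (ph0 : phi 0%N ^+ 2 - phi 0%N = 2 * 0 ^+ 2)
  (phS : forall k : nat, phi k.+1 ^+ 2 - phi k.+1 = 2 * theta k ^+ 2)
  (y0 : y 0%N = x 0%N) (xt0 : xt 0%N = x 0%N)
  (rec : forall k : nat,
     y k.+1 = x k - L^-1 *: gradient f (x k) /\
     x k.+1 = y k.+1 + ((theta k - 1) / theta k.+1) *: (y k.+1 - y k)
                     + (theta k / theta k.+1) *: (y k.+1 - x k) /\
     xt k.+1 = y k.+1 + ((theta k - 1) / phi k.+1) *: (y k.+1 - y k)
                      + (theta k / phi k.+1) *: (y k.+1 - x k)).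

Local Notation g := (gradient f).
Let L0' : L != 0. Proof. by rewrite gt_eqF. Qed.
Let thp k : theta k.+1 != 0. Proof. by rewrite gt_eqF //; case: (thS k). Qed.
Let php' k : phi k != 0. Proof. by rewrite gt_eqF. Qed.

Definition zz k := theta k *: x k - (theta k - 1) *: y k.

Lemma yS k : y k.+1 = x k - L^-1 *: g (x k).
Proof. by case: (rec k). Qed.

Lemma zzS k : zz k.+1 = zz k - (2 * theta k / L) *: g (x k).
Proof.
have [Hy [Hx _]] := rec k.
rewrite /zz Hx Hy; apply/rowP => j; rewrite !mxE.
by field; apply/andP.
Qed.

Lemma xS k : x k.+1 = (theta k.+1)^-1 *: ((theta k.+1 - 1) *: y k.+1 + zz k.+1).
Proof.
rewrite /zz; apply/rowP => j; rewrite !mxE.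
by field.
Qed.

Lemma xtS k : xt k.+1 = (phi k.+1)^-1 *: ((phi k.+1 - 1) *: y k.+1 + zz k.+1).
Proof.
have [Hy [Hx Ht]] := rec k.
rewrite /zz Ht Hx; apply/rowP => j; rewrite !mxE.
by field; apply/andP.
Qed.

Definition V k := 2 * theta k ^+ 2 * (f (x k) - f xs - (2 * L)^-1 * dotv (g (x k)) (g (x k)))
  + L / 2 * dotv (zz k.+1 - xs) (zz k.+1 - xs).

Lemma gxs : g xs = 0.
Proof. exact: (@grad_min R n f L xs df L0 Lip hmin). Qed.

Lemma Vstep k : V k.+1 <= V k.
Proof.
have [s0 ts] := thS k.
have Q1 := @interp R n f L df L0 Lip cvx xs (x k.+1).
have Q2 := @interp R n f L df L0 Lip cvx (x k) (x k.+1).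
rewrite gxs sub0r !(dotvNl, dotvNr) opprK in Q1.
have S := @S_zero R n _ _ _ _ xs _ _ _ _ _ (thp k) L0' (yS k) (xS k) (zzS k.+1).
have E : V k.+1 - V k =
   2 * theta k.+1 * (f (x k.+1) + dotv (xs - x k.+1) (g (x k.+1))
        + (2 * L)^-1 * dotv (g (x k.+1)) (g (x k.+1)) - f xs)
 + 2 * (theta k.+1 ^+ 2 - theta k.+1) * (f (x k.+1) + dotv (x k - x k.+1) (g (x k.+1))
        + (2 * L)^-1 * dotv (g (x k) - g (x k.+1)) (g (x k) - g (x k.+1)) - f (x k))
 + (2 * theta k.+1 * (- dotv (xs - x k.+1) (g (x k.+1)) - (2 * L)^-1 * dotv (g (x k.+1)) (g (x k.+1)))
  + 2 * (theta k.+1 ^+ 2 - theta k.+1) * (- dotv (x k - x k.+1) (g (x k.+1))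
      - (2 * L)^-1 * dotv (g (x k) - g (x k.+1)) (g (x k) - g (x k.+1)))
  - theta k.+1 ^+ 2 / L * dotv (g (x k.+1)) (g (x k.+1))
  + (theta k.+1 ^+ 2 - theta k.+1) / L * dotv (g (x k)) (g (x k))
  + L / 2 * dotv (zz k.+2 - xs) (zz k.+2 - xs) - L / 2 * dotv (zz k.+1 - xs) (zz k.+1 - xs)).
  rewrite /V -ts. by field.
rewrite S addr0 in E.
have tt : 0 <= theta k.+1 ^+ 2 - theta k.+1 by rewrite ts sqr_ge0.
rewrite -subr_le0 E.
have a1 : 2 * theta k.+1 * (f (x k.+1) + dotv (xs - x k.+1) (g (x k.+1))
        + (2 * L)^-1 * dotv (g (x k.+1)) (g (x k.+1)) - f xs) <= 0.
  by rewrite mulr_ge0_le0 ?subr_le0 // mulr_ge0 // ltW.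
have a2 : 2 * (theta k.+1 ^+ 2 - theta k.+1) * (f (x k.+1) + dotv (x k - x k.+1) (g (x k.+1))
        + (2 * L)^-1 * dotv (g (x k) - g (x k.+1)) (g (x k) - g (x k.+1)) - f (x k)) <= 0.
  by rewrite mulr_ge0_le0 ?subr_le0 // mulr_ge0.
lra.
Qed.

Lemma V0_le : V 0 <= L / 2 * dotv (x 0 - xs) (x 0 - xs).
Proof.
have z1 : zz 1 = x 0 - (2 / L) *: g (x 0).
  by rewrite zzS /zz th0 subrr scale0r subr0 scale1r mulr1.
have T := @T_base0 R n L (x 0) xs (g (x 0)) (zz 1) L0' z1.
have Q0 := @interp R n f L df L0 Lip cvx xs (x 0).
rewrite gxs sub0r !(dotvNl, dotvNr) opprK in Q0.
rewrite /V th0 expr1n mulr1.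
have E : 2 * (f (x 0) - f xs - (2 * L)^-1 * dotv (g (x 0)) (g (x 0))) =
   2 * (f (x 0) - f xs) + 2 * (- ((2 * L)^-1 * dotv (g (x 0)) (g (x 0)))) by ring.
rewrite E -addrA T.
lra.
Qed.

Lemma Vk_le k : V k <= L / 2 * dotv (x 0 - xs) (x 0 - xs).
Proof.
elim: k => [|k IH]; first exact: V0_le.
exact: le_trans (Vstep k) IH.
Qed.

Lemma final_le k : phi k ^+ 2 * (f (xt k) - f xs) <= L / 2 * dotv (x 0 - xs) (x 0 - xs).
Proof.
case: k => [|k].
  have p0 := php 0.
  have h0 := ph0; rewrite expr0n mulr0 in h0.
  have -> : phi 0 = 1.
    have : phi 0 * (phi 0 - 1) = 0 by rewrite mulrBr mulr1 -expr2.
    by move/eqP; rewrite mulf_eq0 gt_eqF //= subr_eq0 => /eqP.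
  rewrite expr1n mul1r xt0.
  have Q0 := @interp R n f L df L0 Lip cvx xs (x 0).
  rewrite gxs sub0r !(dotvNl, dotvNr) opprK in Q0.
  have T := @T_base1 R n L (x 0) xs (g (x 0)) L0'.
  have D := dotv_ge0 (g (x 0) - L *: (x 0 - xs)).
  have cL : 0 <= (2 * L)^-1 by rewrite invr_ge0 mulr_ge0 // ltW.
  have := mulr_ge0 cL D.
  rewrite !dotvBl in Q0 T *.
  lra.
apply: le_trans (Vk_le k).
have Q3 := @interp R n f L df L0 Lip cvx xs (xt k.+1).
have Q4 := @interp R n f L df L0 Lip cvx (x k) (xt k.+1).
rewrite gxs sub0r !(dotvNl, dotvNr) opprK in Q3.
have T := @T_final R n _ _ _ _ xs _ (g (xt k.+1)) _ _ (php' k.+1) L0' (yS k) (xtS k).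
have pp := phS k.
have E : phi k.+1 ^+ 2 * (f (xt k.+1) - f xs) - V k =
   phi k.+1 * (f (xt k.+1) + dotv (xs - xt k.+1) (g (xt k.+1))
        + (2 * L)^-1 * dotv (g (xt k.+1)) (g (xt k.+1)) - f xs)
 + (phi k.+1 ^+ 2 - phi k.+1) * (f (xt k.+1) + dotv (x k - xt k.+1) (g (xt k.+1))
        + (2 * L)^-1 * dotv (g (x k) - g (xt k.+1)) (g (x k) - g (xt k.+1)) - f (x k))
 + (phi k.+1 * (- dotv (xs - xt k.+1) (g (xt k.+1)) - (2 * L)^-1 * dotv (g (xt k.+1)) (g (xt k.+1)))
  + (phi k.+1 ^+ 2 - phi k.+1) * (- dotv (x k - xt k.+1) (g (xt k.+1))
      - (2 * L)^-1 * dotv (g (x k) - g (xt k.+1)) (g (x k) - g (xt k.+1)))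
  + (phi k.+1 ^+ 2 - phi k.+1) / 2 / L * dotv (g (x k)) (g (x k))
  - L / 2 * dotv (zz k.+1 - xs) (zz k.+1 - xs)).
  have th2 : theta k ^+ 2 = (phi k.+1 ^+ 2 - phi k.+1) / 2 by rewrite pp; field.
  rewrite /V th2. by field.
rewrite T in E.
have tt : 0 <= phi k.+1 ^+ 2 - phi k.+1 by rewrite pp mulr_ge0 // sqr_ge0.
rewrite -subr_le0 E.
have a1 : phi k.+1 * (f (xt k.+1) + dotv (xs - xt k.+1) (g (xt k.+1))
        + (2 * L)^-1 * dotv (g (xt k.+1)) (g (xt k.+1)) - f xs) <= 0.
  by rewrite mulr_ge0_le0 ?subr_le0 // ltW.
have a2 : (phi k.+1 ^+ 2 - phi k.+1) * (f (xt k.+1) + dotv (x k - xt k.+1) (g (xt k.+1))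
        + (2 * L)^-1 * dotv (g (x k) - g (xt k.+1)) (g (x k) - g (xt k.+1)) - f (x k)) <= 0.
  by rewrite mulr_ge0_le0 ?subr_le0.
have a3 : 0 <= (2 * L)^-1 * dotv (phi k.+1 *: g (xt k.+1) - L *: (zz k.+1 - xs))
     (phi k.+1 *: g (xt k.+1) - L *: (zz k.+1 - xs)).
  by rewrite mulr_ge0 ?dotv_ge0 // invr_ge0 mulr_ge0 // ltW.
lra.
Qed.

Lemma part1 k : f (xt k) - f xs <= L * enorm (x 0%N - xs) ^+ 2 / (2 * phi k ^+ 2).
Proof.
have p0 : 0 < 2 * phi k ^+ 2 by rewrite mulr_gt0 // exprn_gt0.
rewrite ler_pdivlMr // enorm_sq.
have := final_le k.
nra.
Qed.
End Part1.

Section Key.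
Context {R : realType}.

Lemma key_bound (k A B l e : R) : 1 <= k -> k / 2 <= A -> k <= B -> 0 <= l ->
  `|e| <= 1 -> B = A + l + e ->
  `|((B ^+ 2)^-1 - (A ^+ 2)^-1 + (2 * l) / A ^+ 3) * k ^+ 3|
    <= 4 * `|e| + 36 * ((l + 1) ^+ 3 / k).
Proof.
move=> k1 kA kB l0 e1 BE.
have k0 : 0 < k by lra.
have A0 : 0 < A by lra.
have B0 : 0 < B by lra.
set d := l + e.
have E : ((B ^+ 2)^-1 - (A ^+ 2)^-1 + (2 * l) / A ^+ 3) * k ^+ 3 =
  - 2 * e * (k ^+ 3 / (A * B ^+ 2)) + (4 * l * d - d ^+ 2) * (k ^+ 3 / (A ^+ 2 * B ^+ 2))
  + 2 * l * d ^+ 2 * (k ^+ 3 / (A ^+ 3 * B ^+ 2)).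
  rewrite /d BE; field.
  by rewrite -BE !gt_eqF.
rewrite E.
have Ta : k ^+ 3 / (A * B ^+ 2) <= 2.
  rewrite ler_pdivrMr ?mulr_gt0 ?exprn_gt0 //.
  have : k ^+ 2 <= B ^+ 2 by rewrite ler_pXn2r // ?nnegrE ltW.
  nra.
have Tb : k ^+ 3 / (A ^+ 2 * B ^+ 2) <= 4 / k.
  rewrite ler_pdivrMr ?mulr_gt0 ?exprn_gt0 // mulrAC ler_pdivlMr //.
  have : k ^+ 2 <= B ^+ 2 by rewrite ler_pXn2r // ?nnegrE ltW.
  have : k ^+ 2 <= 4 * A ^+ 2 by nra.
  nra.
have Tc : k ^+ 3 / (A ^+ 3 * B ^+ 2) <= 8 / k.
  rewrite ler_pdivrMr ?mulr_gt0 ?exprn_gt0 // mulrAC ler_pdivlMr //.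
  have : k ^+ 2 <= B ^+ 2 by rewrite ler_pXn2r // ?nnegrE ltW.
  have : k ^+ 3 <= 8 * A ^+ 3.
    have -> : 8 * A ^+ 3 = (2 * A) ^+ 3 by ring.
    by rewrite ler_pXn2r ?nnegrE //; lra.
  move=> h3 h2.
  have h2' : k <= B ^+ 2 by nra.
  have : k ^+ 3 * k <= (8 * A ^+ 3) * B ^+ 2.
    apply: ler_pM; [by rewrite exprn_ge0 // ltW | lra | lra | lra].
  lra.
have ta0 : 0 <= k ^+ 3 / (A * B ^+ 2) by rewrite divr_ge0 // ?mulr_ge0 ?exprn_ge0 // ltW.
have tb0 : 0 <= k ^+ 3 / (A ^+ 2 * B ^+ 2) by rewrite divr_ge0 // ?mulr_ge0 ?exprn_ge0 // ltW.
have tc0 : 0 <= k ^+ 3 / (A ^+ 3 * B ^+ 2) by rewrite divr_ge0 // ?mulr_ge0 ?exprn_ge0 // ltW.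
move: Ta Tb Tc ta0 tb0 tc0.
set ta := k ^+ 3 / (A * B ^+ 2).
set tb := k ^+ 3 / (A ^+ 2 * B ^+ 2).
set tc := k ^+ 3 / (A ^+ 3 * B ^+ 2).
have ik0 : 0 <= k^-1 by rewrite invr_ge0 ltW.
set ik := k^-1.
move=> Ta Tb Tc ta0 tb0 tc0.
have hd : -(l + 1) <= d <= l + 1.
  by move: e1; rewrite /d ler_norml; lra.
case/andP: hd => hd1 hd2.
have hc : (l + 1) ^+ 2 <= (l + 1) ^+ 3.
  have -> : (l + 1) ^+ 3 = (l + 1) ^+ 2 + l * (l + 1) ^+ 2 by ring.
  by rewrite lerDl mulr_ge0 // sqr_ge0.
set c := (l + 1) ^+ 3 in hc *.
have hc2 : (l + 1) ^+ 2 = (l + 1) * (l + 1) by rewrite expr2.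
have h1 : `|4 * l * d - d ^+ 2| <= 5 * c.
  rewrite ler_norml; apply/andP; split; nra.
have h2 : `|2 * l * d ^+ 2| <= 2 * c.
  have p : 0 <= 2 * l * d ^+ 2 by rewrite mulr_ge0 ?sqr_ge0 // mulr_ge0.
  rewrite ger0_norm //.
  have H : d ^+ 2 <= (l + 1) ^+ 2 by rewrite expr2 [X in _ <= X]expr2; nra.
  have := ler_wpM2l l0 H.
  have : l * (l + 1) ^+ 2 <= c.
    rewrite /c; have -> : (l + 1) ^+ 3 = (l + 1) ^+ 2 + l * (l + 1) ^+ 2 by ring.
    by rewrite lerDr sqr_ge0.
  lra.
have c0 : 0 <= c by rewrite exprn_ge0 //; lra.
apply: (le_trans (ler_normD _ _)).
have -> : 4 * `|e| + 36 * (c * ik) = (4 * `|e| + 20 * (c * ik)) + 16 * (c * ik) by ring.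
apply: lerD; last first.
  rewrite normrM (ger0_norm tc0).
  have := ler_pM (normr_ge0 _) tc0 h2 Tc.
  lra.
apply: (le_trans (ler_normD _ _)).
apply: lerD.
  rewrite normrM (ger0_norm ta0) normrM normrN.
  have -> : `|2 : R| = 2 by rewrite ger0_norm.
  have := ler_pM (normr_ge0 e) ta0 (lexx _) Ta.
  lra.
rewrite normrM (ger0_norm tb0).
have := ler_pM (normr_ge0 _) tb0 h1 Tb.
lra.
Qed.
End Key.

Section Aux.
Context {R : realType}.

Lemma theta_lb (theta : nat -> R) : theta 0%N = 1 ->
  (forall k : nat, 0 < theta k.+1 /\ theta k.+1 ^+ 2 - theta k.+1 = theta k ^+ 2) ->
  forall m : nat, 1 + m%:R / 2 <= theta m.
Proof.
move=> t0 tS; elim=> [|m IH]; first by rewrite t0 mul0r addr0.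
have [s0 E] := tS m.
rewrite -natr1.
have : theta m + 2^-1 <= theta m.+1.
  have t1 : 1 <= theta m by have : 0 <= m%:R / 2 :> R by []; lra.
  rewrite expr2 in E; rewrite expr2 in E.
  nra.
lra.
Qed.

Lemma ln_le_q (k : R) : 1 <= k ->
  ln k <= 4 * Num.sqrt (Num.sqrt k) /\ Num.sqrt (Num.sqrt k) ^+ 4 = k
  /\ 1 <= Num.sqrt (Num.sqrt k).
Proof.
move=> k1.
have k0 : 0 <= k by lra.
set q := Num.sqrt (Num.sqrt k).
have q4 : q ^+ 4 = k.
  by rewrite (_ : 4 = 2 * 2)%N // exprM !sqr_sqrtr // sqrtr_ge0.
have q1 : 1 <= q by rewrite /q -sqrtr1 ler_sqrt ?sqrtr_ge0 // -sqrtr1 ler_sqrt.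
split; last by split.
rewrite -q4 lnXn; last lra.
have qp : 0 < q by lra.
have h := ln_sublinear qp.
rewrite -mulr_natr; lra.
Qed.

Lemma ln_diff (m : R) : 1 <= m -> 0 <= ln (m + 1) - ln m <= m^-1.
Proof.
move=> m1.
have m0 : 0 < m by lra.
apply/andP; split.
  by rewrite subr_ge0 ler_ln ?posrE //; lra.
have -> : m + 1 = m * (1 + m^-1) by rewrite mulrDr mulr1 divff // gt_eqF.
rewrite lnM ?posrE //; last by rewrite addr_gt0 // invr_gt0.
rewrite addrAC subrr add0r le_ln1Dx //.
have : 0 < m^-1 by rewrite invr_gt0.
lra.
Qed.

Lemma phi_w (s2 p t : R) : s2 ^+ 2 = 2 -> 0 < s2 -> 0 < p -> 1 <= t ->
  p ^+ 2 - p = 2 * t ^+ 2 ->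
  2 * t <= s2 * p - s2^-1 /\ s2 * p - s2^-1 - 2 * t <= (8 * t)^-1.
Proof.
move=> s22 s20 p0 t1 E.
have i2 : s2 * s2^-1 = 1 by rewrite divff // gt_eqF.
set w := s2 * p - s2^-1.
have W : w ^+ 2 = (2 * t) ^+ 2 + 2^-1.
  rewrite /w.
  have -> : (s2 * p - s2^-1) ^+ 2 = s2 ^+ 2 * (p ^+ 2 - p) + s2 ^+ 2 * p
         - 2 * (s2 * s2^-1) * p + (s2 ^-1) ^+ 2 by ring.
  rewrite i2 s22 E.
  have -> : s2^-1 ^+ 2 = 2^-1 by rewrite exprVn s22.
  ring.
have p1 : 1 < p.
  have : 0 < p ^+ 2 - p by rewrite E mulr_gt0 // exprn_gt0 //; lra.
  rewrite expr2; nra.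
have w0 : 0 < w.
  have iv : s2^-1 = s2 / 2.
    apply: (mulfI (_ : s2 != 0)); first by rewrite gt_eqF.
    by rewrite i2 mulrA -expr2 s22 divff.
  rewrite /w iv; nra.
have Wt : 2 * t <= w.
  have : 0 < 2 * t by lra.
  move: W; rewrite !expr2 => W h.
  nra.
split => //.
rewrite -div1r ler_pdivlMr; last lra.
have : (w - 2 * t) * (w + 2 * t) = 2^-1.
  by rewrite -subr_sqr W addrAC subrr add0r.
nra.
Qed.
End Aux.

Lemma core {R : realType} (m t p zeta e' : R) :
  1 <= m -> 0 < e' -> e' <= 1 -> 1 + m / 2 <= t -> 0 < p -> p ^+ 2 - p = 2 * t ^+ 2 ->
  `|zeta - (2 * t - m - 1 - 2^-1 * ln m)| < e' / 16 ->
  2 * `|zeta| < m + 1 -> 16 / e' + 1 < m + 1 -> (1944 / e') ^+ 4 < m + 1 ->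
  `|((2 * p ^+ 2)^-1 - ((m + 1 + zeta + (Num.sqrt 2)^-1) ^+ 2)^-1
     + ln (m + 1) / (m + 1 + zeta + (Num.sqrt 2)^-1) ^+ 3) * (m + 1) ^+ 3| < e'.
Proof.
move=> mR e'0 e'1 tl p0 pt em hb hc hd.
set s2 := Num.sqrt 2.
have s20 : 0 < s2 by rewrite sqrtr_gt0.
have s22 : s2 ^+ 2 = 2 by rewrite sqr_sqrtr.
have i20 : 0 < s2^-1 by rewrite invr_gt0.
have t1 : 1 <= t.
  have h : 0 <= m / 2 by rewrite divr_ge0 //; clear -mR; lra.
  clear -tl h; lra.
have [w1 w2] := @phi_w _ s2 p t s22 s20 p0 t1 pt.
set B := s2 * p in w1 w2 *.
set A := m + 1 + zeta + s2^-1.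
set l := ln (m + 1) / 2.
set eps1 := B - A - l.
have k1 : 1 <= m + 1 by clear -mR; lra.
have [lq [q4 q1]] := @ln_le_q _ (m + 1) k1.
set q := Num.sqrt (Num.sqrt (m + 1)) in lq q4 q1.
have /andP[z1 z2] : - `|zeta| <= zeta <= `|zeta| by rewrite -ler_norml.
have /andP[lnd1 lnd2] := @ln_diff _ m mR.
have m0 : 0 < m by clear -mR; lra.
have im : m^-1 <= e' / 16.
  have : 16 / e' < m by clear -hc; lra.
  rewrite ltr_pdivrMr // => h.
  rewrite ler_pdivlMr // mulrC ler_pdivrMr //; clear -h; lra.
have it : (8 * t)^-1 <= m^-1 / 4.
  rewrite -invfM lef_pV2 ?posrE; clear -tl m0 t1; lra.
have epsb : `|eps1| < e' / 8.
  have E : eps1 = (B - s2^-1 - 2 * t) - (zeta - (2 * t - m - 1 - 2^-1 * ln m))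
          - (ln (m + 1) - ln m) / 2.
    by rewrite /eps1 /l /A; ring.
  move: em; rewrite E ltr_norml ltr_norml => /andP[e1 e2].
  clear -e1 e2 w1 w2 it lnd1 lnd2 im.
  apply/andP; split; lra.
have c2 : (m + 1) / 2 <= A by rewrite /A; clear -hb z1 i20; lra.
have c3 : m + 1 <= B by clear -w1 tl i20; lra.
have c4 : 0 <= l by rewrite /l divr_ge0 // ln_ge0.
have c5 : `|eps1| <= 1 by clear -epsb e'1; lra.
have c6 : B = A + l + eps1 by rewrite /eps1; ring.
have kb := @key_bound _ _ _ _ _ _ k1 c2 c3 c4 c5 c6.
have EU : (2 * p ^+ 2)^-1 = (B ^+ 2)^-1 by rewrite /B exprMn s22.
have EL : ln (m + 1) = 2 * l by rewrite /l mulrC divfK.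
rewrite EU EL.
have q0 : 0 < q by clear -q1; lra.
have lb : (l + 1) ^+ 3 / (m + 1) <= 27 / q.
  have l3 : l + 1 <= 3 * q by rewrite /l; clear -lq q1; lra.
  have h3 : (l + 1) ^+ 3 <= (3 * q) ^+ 3.
    rewrite ler_pXn2r // nnegrE; clear -l3 c4 q1; lra.
  have -> : 27 / q = 27 * q ^+ 3 / q ^+ 4.
    by rewrite (exprSr q 3) invfM mulrA mulfK // gt_eqF // exprn_gt0.
  rewrite -q4; apply: ler_wpM2r; first by rewrite invr_ge0 exprn_ge0 // ltW.
  by move: h3; rewrite exprMn (_ : 3 ^+ 3 = 27) //; ring.
have qb : 1944 / e' < q.
  have h1 : 0 <= 1944 / e' by apply: divr_ge0; [apply: ler0n | apply: ltW].
  have h2 : 0 <= q by apply: ltW.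
  have := @ltr_pXn2r _ 4 isT (1944 / e') q.
  rewrite !nnegrE => /(_ h1 h2) <-.
  by rewrite q4.
have fin : 36 * (27 / q) < e' / 2.
  rewrite ltr_pdivrMr // in qb.
  rewrite mulrA ltr_pdivrMr //; clear -qb; lra.
apply: le_lt_trans kb _.
clear -lb fin epsb; lra.
Qed.

Lemma part2 {R : realType} (theta phi : nat -> R) (zeta C : R) :
  theta 0%N = 1 ->
  (forall k : nat, 0 < theta k.+1 /\ theta k.+1 ^+ 2 - theta k.+1 = theta k ^+ 2) ->
  (forall k : nat, 0 < phi k) ->
  (forall k : nat, phi k.+1 ^+ 2 - phi k.+1 = 2 * theta k ^+ 2) ->
  (fun k : nat => 2 * theta k - k%:R - 1 - 2^-1 * ln (k%:R : R)) @ \oo --> zeta ->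
  (fun k : nat =>
     (C / (2 * phi k ^+ 2)
      - (C / (k%:R + zeta + (Num.sqrt 2)^-1) ^+ 2
         - C * ln (k%:R : R)
             / (k%:R + zeta + (Num.sqrt 2)^-1) ^+ 3))
     * (k%:R) ^+ 3) @ \oo --> (0 : R).
Proof.
move=> th0 thS php phS hlim.
set s2 := Num.sqrt 2.
set A := fun k : nat => (k%:R + zeta + s2^-1 : R).
set U := fun k : nat => ((2 * phi k ^+ 2)^-1 - (A k ^+ 2)^-1 + ln (k%:R : R) / A k ^+ 3) * k%:R ^+ 3.
suff HU : U @ \oo --> 0.
  have := cvgMl_tmp (a := C) HU; rewrite mulr0.
  move=> H; match goal with |- ?f @ _ --> _ => have -> : f = (fun k => C * U k) end => //.
    by apply: funext => k; rewrite /U /A; ring.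
  by apply: H.
apply/cvgr0Pnorm_lt => eps eps0.
set e' := Num.min eps 1.
have e'0 : 0 < e' by rewrite lt_min eps0 ltr01.
have e'e : e' <= eps by rewrite ge_min lexx.
have e'1 : e' <= 1 by rewrite ge_min lexx orbT.
have e16 : 0 < e' / 16 by rewrite divr_gt0.
have [N1 _ HN1] := (cvgrPdist_lt _ _).1 hlim (e' / 16) e16.
near=> k.
have ha : (N1.+2 <= k)%N by near: k; exact: nbhs_infty_ge.
have hb : 2 * `|zeta| < k%:R by near: k; exact: nbhs_infty_gtr.
have hc : 16 / e' + 1 < k%:R by near: k; exact: nbhs_infty_gtr.
have hd : (1944 / e') ^+ 4 < k%:R by near: k; exact: nbhs_infty_gtr.
have [m km] : exists m, k = m.+1 by exists k.-1; rewrite prednK // (leq_ltn_trans (leq0n N1.+1) ha).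
subst k.
have mN : (N1 <= m)%N := ltnW ha.
have m1n : (0 < m)%N := leq_ltn_trans (leq0n N1) ha.
have mR : 1 <= m%:R :> R by rewrite ler1n.
have kR : m.+1%:R = m%:R + 1 :> R by rewrite -natr1.
have tl : 1 + m%:R / 2 <= theta m := @theta_lb _ theta th0 thS m.
have em := HN1 m mN; rewrite /= in em.
rewrite kR in hb hc hd.
have := @core _ (m%:R) (theta m) (phi m.+1) zeta e' mR e'0 e'1 tl (php m.+1) (phS m) em hb hc hd.
rewrite /U /A kR => h.
by apply: lt_le_trans h e'e.
Unshelve. all: by end_near.
Qed.

Theorem corollary3 (R : realType) (n : nat) (f : 'rV[R]_n -> R) (L : R)
  (xs : 'rV[R]_n) (theta phi : nat -> R) (zeta : R)
  (x y xt : nat -> 'rV[R]_n) :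
  convex_fun f ->
  (forall z : 'rV[R]_n, differentiable f z) ->
  0 < L ->
  (forall u v : 'rV[R]_n, enorm (gradient f u - gradient f v) <= L * enorm (u - v)) ->
  (forall z : 'rV[R]_n, f xs <= f z) ->
  (* theta k stands for the paper's theta_k (k >= 0); theta_{-1} = 0 *)
  theta 0%N = 1 ->
  (forall k : nat, 0 < theta k.+1 /\ theta k.+1 ^+ 2 - theta k.+1 = theta k ^+ 2) ->
  (forall k : nat, 0 < phi k) ->
  phi 0%N ^+ 2 - phi 0%N = 2 * 0 ^+ 2 ->
  (forall k : nat, phi k.+1 ^+ 2 - phi k.+1 = 2 * theta k ^+ 2) ->
  (* zeta is the limit given in the context *)
  (fun k : nat => 2 * theta k - k%:R - 1 - 2^-1 * ln (k%:R : R)) @ \oo --> zeta ->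
  y 0%N = x 0%N ->
  xt 0%N = x 0%N ->
  (forall k : nat,
     y k.+1 = x k - L^-1 *: gradient f (x k) /\
     x k.+1 = y k.+1 + ((theta k - 1) / theta k.+1) *: (y k.+1 - y k)
                     + (theta k / theta k.+1) *: (y k.+1 - x k) /\
     xt k.+1 = y k.+1 + ((theta k - 1) / phi k.+1) *: (y k.+1 - y k)
                      + (theta k / phi k.+1) *: (y k.+1 - x k)) ->
  (forall k : nat,
     f (xt k) - f xs <= L * enorm (x 0%N - xs) ^+ 2 / (2 * phi k ^+ 2)) /\
  (fun k : nat =>
     (L * enorm (x 0%N - xs) ^+ 2 / (2 * phi k ^+ 2)
      - (L * enorm (x 0%N - xs) ^+ 2 / (k%:R + zeta + (Num.sqrt 2)^-1) ^+ 2
         - L * enorm (x 0%N - xs) ^+ 2 * ln (k%:R : R)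
             / (k%:R + zeta + (Num.sqrt 2)^-1) ^+ 3))
     * (k%:R) ^+ 3) @ \oo --> (0 : R).
Proof.
move=> cvx df L0 Lip hmin th0 thS php ph0 phS hlim y0 xt0 rec.
split.
  move=> k.
  exact: (@part1 R n f L xs theta phi x y xt df L0 Lip cvx hmin th0 thS php ph0 phS xt0 rec k).
exact: (@part2 R theta phi zeta (L * enorm (x 0%N - xs) ^+ 2) th0 thS php phS hlim).
Qed.
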